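(* Let $I=[a,b)\subseteq[0,1)$ with $a<b$. (a) For every $x^n\in\{0,1\}^n$, $\bar F_I(x^n)\ge F_I(x^n-1)$. (b) For every $x^n$ that is not the largest element in Gray order, $\bar F_I(x^n)\ge\lfloor F_I(x^n)\rfloor_{\lambda_h(x^n+1)}$. (c) Consequently, for every $x^n$ that is neither the smallest nor the largest element in Gray order, $$\Big[\min\{\bar F_I(x^n-1),F_I(x^n-1)\},\ \min\{\bar F_I(x^n),F_I(x^n)\}\Big)\subseteq\Big[\lfloor F_I(x^n-1)\rfloor_{\lambda_h(x^n)},\ \bar F_I(x^n)\Big).$$
   Context: Let $p$ be a probability distribution on $\{0,1\}$ with $p(0),p(1)\in(0,1)$, $p(0)\ne p(1)$, $\rho=\max\{p(0)/p(1),p(1)/p(0)\}$, and $p(x^n)=\prod_i p(x_i)$. Gray code is $g(x^n)=x^n\oplus(0,x_1,\dots,x_{n-1})$; Gray order $\preceq_G$ on $\{0,1\}^n$ is $x^n\preceq_G y^n$ iff $g^{-1}(x^n)\preceq_L g^{-1}(y^n)$ (lexicographic). $x^n+1$ and $x^n-1$ denote the immediate successor and predecessor in Gray order. $F(x^n)=\sum_{a^n\preceq_G x^n}p(a^n)$, with $F(x^n-1):=0$ if $x^n$ is the smallest element. For an interval $I=[a,b)$: $F_I(x^n)=a+(b-a)F(x^n)$; $\alpha_h:=\rho$; $\lambda_h(x^n)=\lfloor-\log_2(\alpha_h(b-a)p(x^n))\rfloor$ (an integer); $\bar F_I(x^n)=\lfloor F_I(x^n-1)+2^{-\lambda_h(x^n)}\rfloor_{\lambda_h(x^n)}$.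 For real $r\ge0$ and integer $l$, $\lfloor r\rfloor_l=2^{-l}\lfloor 2^lr\rfloor$. *)

(* Defs.v *)
From Stdlib Require Import Reals Lra Lia ZArith List Bool.
Import ListNotations.
Open Scope R_scope.

(** Binary strings x^n are lists of booleans (false = 0, true = 1) of length n. *)

(** Gray code g(x^n) = x^n xor (0, x_1, ..., x_{n-1}). *)
Fixpoint gray_aux (prev : bool) (x : list bool) : list bool :=
  match x with
  | [] => []
  | b :: x' => xorb b prev :: gray_aux b x'
  end.
Definition gray (x : list bool) : list bool := gray_aux false x.

Fixpoint ginv_aux (c : bool) (x : list bool) : list bool :=
  match x with
  | [] => []
  | b :: x' => let c' := xorb c b in c' :: ginv_aux c' x'
  end.
Definition ginv (x : list bool) : list bool := ginv_aux false x.

Lemma gray_ginv_aux c x : gray_aux c (ginv_aux c x) = x.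
Proof.
  revert c; induction x as [|b x IH]; intro c; simpl; [reflexivity|].
  rewrite IH. f_equal. destruct c, b; reflexivity.
Qed.
Lemma gray_ginv x : gray (ginv x) = x.
Proof. apply gray_ginv_aux. Qed.
Lemma ginv_gray_aux c x : ginv_aux c (gray_aux c x) = x.
Proof.
  revert c; induction x as [|b x IH]; intro c; simpl; [reflexivity|].
  replace (xorb c (xorb b c)) with b by (destruct b, c; reflexivity).
  rewrite IH. reflexivity.
Qed.
Lemma ginv_gray x : ginv (gray x) = x.
Proof. apply ginv_gray_aux. Qed.

Fixpoint lexlt (u v : list bool) : bool :=
  match u, v with
  | bu :: u', bv :: v' => (negb bu && bv) || (Bool.eqb bu bv && lexlt u' v')
  | _, _ => false
  end.

Definition ltG (x y : list bool) : bool := lexlt (ginv x) (ginv y).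
Definition leG (x y : list bool) : bool :=
  ltG x y || (if list_eq_dec Bool.bool_dec x y then true else false).

Fixpoint allbits (n : nat) : list (list bool) :=
  match n with
  | O => [ [] ]
  | S m => map (cons false) (allbits m) ++ map (cons true) (allbits m)
  end.

(** y is the immediate successor of x in Gray order (y = x + 1, x = y - 1). *)
Definition is_succG (n : nat) (x y : list bool) : Prop :=
  length x = n /\ length y = n /\ ltG x y = true /\
  forall z, length z = n -> ~ (ltG x z = true /\ ltG z y = true).

Definition pbit (p0 p1 : R) (b : bool) : R := if b then p1 else p0.
Definition pw (p0 p1 : R) (x : list bool) : R := fold_right Rmult 1 (map (pbit p0 p1) x).

Definition sumR (l : list R) : R := fold_right Rplus 0 l.

Definition Fcdf (p0 p1 : R) (n : nat) (x : list bool) : R :=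
  sumR (map (pw p0 p1) (filter (fun a => leG a x) (allbits n))).

(** F(x^n - 1) = sum_{a^n <_G x^n} p(a^n), which is 0 when x^n is the smallest element. *)
Definition Fprev (p0 p1 : R) (n : nat) (x : list bool) : R :=
  sumR (map (pw p0 p1) (filter (fun a => ltG a x) (allbits n))).

Definition rho (p0 p1 : R) : R := Rmax (p0 / p1) (p1 / p0).

Definition Rfloor (r : R) : Z := (up r - 1)%Z.
Definition floorl (r : R) (l : Z) : R :=
  powerRZ 2 (- l) * IZR (Rfloor (powerRZ 2 l * r)).

Definition log2 (r : R) : R := ln r / ln 2.

Definition FI (p0 p1 a b : R) (n : nat) (x : list bool) : R :=
  a + (b - a) * Fcdf p0 p1 n x.
Definition FIprev (p0 p1 a b : R) (n : nat) (x : list bool) : R :=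
  a + (b - a) * Fprev p0 p1 n x.

(** lambda_h(x) = floor(- log2(alpha_h (b - a) p(x))), alpha_h = rho. *)
Definition lam (p0 p1 a b : R) (x : list bool) : Z :=
  Rfloor (- log2 (rho p0 p1 * (b - a) * pw p0 p1 x)).

Definition Fbar (p0 p1 a b : R) (n : nat) (x : list bool) : R :=
  floorl (FIprev p0 p1 a b n x + powerRZ 2 (- lam p0 p1 a b x)) (lam p0 p1 a b x).

(* Main.v *)
Require Import Defs.
From Stdlib Require Import Reals List Lra Lia ZArith Bool.
Import ListNotations.
Open Scope R_scope.

Lemma Rfloor_le r : IZR (Rfloor r) <= r.
Proof. unfold Rfloor. rewrite minus_IZR. destruct (archimed r). lra. Qed.
Lemma Rfloor_gt r : r < IZR (Rfloor r) + 1.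
Proof. unfold Rfloor. rewrite minus_IZR. destruct (archimed r). lra. Qed.

Lemma p2pos z : 0 < powerRZ 2 z.
Proof. apply powerRZ_lt; lra. Qed.

Lemma floorl_le r l : floorl r l <= r.
Proof. unfold floorl. rewrite powerRZ_neg'. pose proof (p2pos l).
  pose proof (Rfloor_le (powerRZ 2 l * r)).
  apply Rmult_le_reg_l with (powerRZ 2 l); auto.
  rewrite <- Rmult_assoc, Rinv_r; lra. Qed.

Lemma floorl_gt r l : r - powerRZ 2 (- l) < floorl r l.
Proof. unfold floorl. rewrite powerRZ_neg'. pose proof (p2pos l).
  pose proof (Rfloor_gt (powerRZ 2 l * r)).
  apply Rmult_lt_reg_l with (powerRZ 2 l); auto.
  rewrite <- Rmult_assoc, Rinv_r by lra. rewrite Rmult_minus_distr_l, Rinv_r by lra. lra. Qed.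

Lemma lam_bound v : 0 < v -> v <= powerRZ 2 (- Rfloor (- log2 v)).
Proof.
  intro hv. set (l := Rfloor (- log2 v)).
  pose proof (Rfloor_le (- log2 v)) as H. fold l in H.
  rewrite powerRZ_Rpower by lra. unfold Rpower.
  rewrite <- (exp_ln v) at 1 by auto.
  assert (hl2 : 0 < ln 2) by (apply ln_lt_0_compat || (rewrite <- ln_1; apply ln_increasing; lra)).
  assert (ln v <= IZR (- l) * ln 2).
  { rewrite opp_IZR. unfold log2 in H.
    assert (ln v / ln 2 <= - IZR l) by lra.
    apply Rmult_le_compat_r with (r := ln 2) in H0; [|lra].
    unfold Rdiv in H0. rewrite Rmult_assoc, Rinv_l in H0 by lra. lra. }
  destruct H0 as [H0|H0]; [left; apply exp_increasing; auto| rewrite H0; lra].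
Qed.

Lemma p2mult l L j : (l <= L)%Z -> exists k, powerRZ 2 (- l) * IZR j = powerRZ 2 (- L) * IZR k.
Proof.
  intro H. exists (j * 2 ^ (L - l))%Z.
  replace (- l)%Z with (- L + (L - l))%Z by lia.
  rewrite powerRZ_add by lra. rewrite mult_IZR.
  replace (L - l)%Z with (Z.of_nat (Z.to_nat (L - l))) by lia.
  rewrite <- pow_powerRZ, <- pow_IZR. ring.
Qed.

Lemma keyM d i j F : 0 < d -> d * IZR i <= F -> F - d < d * IZR j -> d * IZR i <= d * IZR j.
Proof.
  intros hd h1 h2. apply Rmult_le_compat_l; [lra|]. apply IZR_le.
  assert (IZR i - IZR j < 1).
  { apply Rmult_lt_reg_l with d; auto. lra. }
  rewrite <- minus_IZR in H. apply lt_IZR in H. lia.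
Qed.

Lemma lexlt_irr u : lexlt u u = false.
Proof. induction u as [|b u IH]; simpl; auto. rewrite IH. destruct b; reflexivity. Qed.

Definition eqf (x a : list bool) : bool := if list_eq_dec Bool.bool_dec a x then true else false.

Lemma sum_split p0 p1 x l :
  sumR (map (pw p0 p1) (filter (fun a => leG a x) l)) =
  sumR (map (pw p0 p1) (filter (fun a => ltG a x) l)) + sumR (map (pw p0 p1) (filter (eqf x) l)).
Proof.
  induction l as [|a l IH]; [unfold sumR; simpl; lra|].
  assert (Hc : forall c r, sumR (c :: r) = c + sumR r) by reflexivity.
  assert (Hr : leG a x = ltG a x || eqf x a) by reflexivity.
  assert (Hi : eqf x a = true -> ltG a x = false).
  { unfold eqf. destruct (list_eq_dec Bool.bool_dec a x); [|discriminate].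
    subst. intros _. unfold ltG. apply lexlt_irr. }
  cbn [filter].
  destruct (leG a x), (ltG a x), (eqf x a); simpl in Hr; try discriminate;
   try (specialize (Hi eq_refl); discriminate);
   cbn [map]; rewrite ?Hc; lra.
Qed.

Lemma nodup_allbits n : NoDup (allbits n).
Proof.
  induction n as [|n IH]; simpl.
  - constructor; [simpl; tauto| constructor].
  - apply NoDup_app.
    + apply NoDup_map_NoDup_ForallPairs; auto. intros u v _ _ H; injection H; auto.
    + apply NoDup_map_NoDup_ForallPairs; auto. intros u v _ _ H; injection H; auto.
    + intros a H1 H2. apply in_map_iff in H1 as [u [<- _]].
      apply in_map_iff in H2 as [v [H _]]. discriminate.
Qed.

Lemma sum_eq_le p0 p1 x l : 0 <= pw p0 p1 x -> NoDup l ->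
  sumR (map (pw p0 p1) (filter (eqf x) l)) <= pw p0 p1 x.
Proof.
  intros hp hl. pose proof (NoDup_filter (eqf x) hl) as hn.
  assert (Hall : forall a, In a (filter (eqf x) l) -> a = x).
  { intros a Ha. apply filter_In in Ha as [_ Ha]. unfold eqf in Ha.
    destruct (list_eq_dec Bool.bool_dec a x); auto; discriminate. }
  destruct (filter (eqf x) l) as [|a [|b r]]; simpl.
  - lra.
  - rewrite (Hall a) by (simpl; auto). lra.
  - exfalso. inversion hn; subst. apply H1. rewrite (Hall a), (Hall b) by (simpl; auto). simpl; auto.
Qed.

Lemma Fcdf_le p0 p1 n x : 0 <= pw p0 p1 x ->
  Fcdf p0 p1 n x <= Fprev p0 p1 n x + pw p0 p1 x.
Proof.
  intro hp. unfold Fcdf, Fprev. rewrite sum_split.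
  pose proof (sum_eq_le p0 p1 x (allbits n) hp (nodup_allbits n)). lra.
Qed.

Fixpoint inc (u : list bool) : list bool * bool :=
  match u with
  | [] => ([], true)
  | b :: u' => let (v, c) := inc u' in
      if c then (if b then (false :: v, true) else (true :: v, false))
      else (b :: v, false)
  end.

Lemma inc_len u : length (fst (inc u)) = length u.
Proof. induction u as [|b u IH]; simpl; auto.
  destruct (inc u) as [v c]; simpl in *. destruct c, b; simpl; auto. Qed.



Lemma incB u : snd (inc u) = true -> forall v, length v = length u ->
  fst (inc u) = v \/ lexlt (fst (inc u)) v = true.
Proof.
  induction u as [|b u IH]; intros H v Hv.
  - destruct v; simpl in *; [auto|discriminate].
  - destruct v as [|c v]; simpl in Hv; [discriminate|]. injection Hv as Hv.
    simpl in *. destruct (inc u) as [w cr]; simpl in *.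
    destruct cr, b; simpl in H; try discriminate.
    destruct c; simpl; [auto|].
    destruct (IH eq_refl v Hv) as [E|E]; [left; subst; auto|right; rewrite E; auto].
Qed.

Lemma incA u v : length v = length u -> lexlt u v = true ->
  snd (inc u) = false /\ (fst (inc u) = v \/ lexlt (fst (inc u)) v = true).
Proof.
  revert v; induction u as [|b u IH]; intros v Hv H.
  - destruct v; simpl in *; discriminate.
  - destruct v as [|c v]; simpl in Hv; [discriminate|]. injection Hv as Hv.
    simpl in H |- *.
    destruct (andb (negb b) c) eqn:E1.
    + destruct b, c; simpl in E1; try discriminate.
      destruct (inc u) as [w cr] eqn:Ei.
      destruct cr; simpl; split; auto.
      assert (Hc : snd (inc u) = true) by (rewrite Ei; auto).
      destruct (incB u Hc v Hv) as [E|E]; rewrite Ei in E; simpl in E.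
      * left; subst; auto.
      * right; rewrite E; auto.
    + simpl in H. apply andb_prop in H as [Hb Hl].
      apply eqb_prop in Hb; subst c.
      destruct (IH v Hv Hl) as [Hc Hr].
      destruct (inc u) as [w cr]; simpl in *; subst cr; simpl; split; auto.
      destruct Hr as [E|E]; [left; subst; auto|right; rewrite E, eqb_reflx, orb_true_r; auto].
Qed.

Lemma incC u : snd (inc u) = false -> lexlt u (fst (inc u)) = true.
Proof.
  induction u as [|b u IH]; simpl; intro H; [discriminate|].
  destruct (inc u) as [w cr] eqn:Ei; simpl in *.
  destruct cr, b; simpl in *; try discriminate; auto;
  rewrite IH; auto.
Qed.

Lemma incE u : snd (inc u) = true ->
  gray_aux false u = gray_aux true (fst (inc u)) /\
  gray_aux true u = gray_aux false (fst (inc u)).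
Proof.
  induction u as [|b u IH]; simpl; intro H; [auto|].
  destruct (inc u) as [w cr] eqn:Ei; simpl in *.
  destruct cr, b; simpl in *; try discriminate.
  destruct (IH eq_refl) as [I1 I2]. rewrite I2. split; reflexivity.
Qed.

Lemma pw_cons p0 p1 b x : pw p0 p1 (b :: x) = pbit p0 p1 b * pw p0 p1 x.
Proof. reflexivity. Qed.

Lemma pw_pos p0 p1 x : 0 < p0 -> 0 < p1 -> 0 < pw p0 p1 x.
Proof. intros. induction x as [|b x IH]; [unfold pw; simpl; lra|].
  rewrite pw_cons. apply Rmult_lt_0_compat; auto. destruct b; simpl; auto. Qed.

Lemma incD p0 p1 (r : R) u : 0 < p0 -> 0 < p1 -> 0 <= r ->
  p1 <= r * p0 -> p0 <= r * p1 ->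
  snd (inc u) = false -> forall p,
  pw p0 p1 (gray_aux p u) <= r * pw p0 p1 (gray_aux p (fst (inc u))).
Proof.
  intros h0 h1 hr hA hB.
  induction u as [|b u IH]; simpl; intro H; [discriminate|].
  intro p.
  destruct (inc u) as [w cr] eqn:Ei; simpl in *.
  assert (Hinc : inc u = (w, cr)) by exact Ei.
  destruct cr.
  - destruct b; simpl in *; try discriminate.
    assert (Hc : snd (inc u) = true) by (rewrite Ei; auto).
    destruct (incE u Hc) as [E1 _]. rewrite Ei in E1; simpl in E1.
    unfold pw; simpl. fold (pw p0 p1 (gray_aux false u)). fold (pw p0 p1 (gray_aux true w)).
    rewrite E1. pose proof (pw_pos p0 p1 (gray_aux true w) h0 h1).
    destruct p; simpl; nra.
  - simpl. unfold pw; simpl. fold (pw p0 p1 (gray_aux b u)). fold (pw p0 p1 (gray_aux b w)).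
    assert (Hc : snd (inc u) = false) by (rewrite Ei; auto).
    specialize (IH eq_refl b).
    assert (0 <= pbit p0 p1 (xorb b p)) by (destruct (xorb b p); simpl; lra).
    nra.
Qed.

Lemma len_ginv_aux c x : length (ginv_aux c x) = length x.
Proof. revert c; induction x; simpl; auto. Qed.
Lemma len_gray_aux c x : length (gray_aux c x) = length x.
Proof. revert c; induction x; simpl; auto. Qed.

Lemma succ_ratio p0 p1 n x y : 0 < p0 -> 0 < p1 -> is_succG n x y ->
  pw p0 p1 x <= rho p0 p1 * pw p0 p1 y.
Proof.
  intros h0 h1 [Lx [Ly [Hlt Hmin]]].
  unfold ltG in Hlt.
  assert (Hl : length (ginv y) = length (ginv x)).
  { unfold ginv; rewrite !len_ginv_aux; congruence. }
  destruct (incA _ _ Hl Hlt) as [Hc [E|E]].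
  2:{ exfalso. apply (Hmin (gray (fst (inc (ginv x))))).
      - unfold gray; rewrite len_gray_aux, inc_len; unfold ginv; rewrite len_ginv_aux; auto.
      - unfold ltG; rewrite ginv_gray; split; auto. apply incC; auto. }
  rewrite <- (gray_ginv x), <- (gray_ginv y), <- E.
  assert (0 < rho p0 p1).
  { unfold rho. pose proof (Rmax_l (p0/p1) (p1/p0)).
    assert (0 < p0/p1) by (apply Rdiv_lt_0_compat; auto). lra. }
  apply incD; auto; try lra; unfold rho.
  - pose proof (Rmax_r (p0/p1) (p1/p0)).
    replace p1 with ((p1/p0)*p0) at 1 by (field; lra). nra.
  - pose proof (Rmax_l (p0/p1) (p1/p0)).
    replace p0 with ((p0/p1)*p1) at 1 by (field; lra). nra.
Qed.

Lemma combine (F Fb m : R) (lx ly i j : Z) :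
  Fb = powerRZ 2 (- lx) * IZR i -> m = powerRZ 2 (- ly) * IZR j -> m <= F ->
  F - powerRZ 2 (- lx) < Fb -> F - powerRZ 2 (- ly) < Fb -> m <= Fb.
Proof.
  intros E1 E2 h1 h2 h3. destruct (Z.le_ge_cases lx ly) as [H|H].
  - destruct (p2mult lx ly i H) as [k Hk]. rewrite Hk in E1. subst.
    apply keyM with F; auto. apply p2pos.
  - destruct (p2mult ly lx j H) as [k Hk]. rewrite Hk in E2. subst.
    apply keyM with F; auto. apply p2pos.
Qed.

Theorem lemma2 (p0 p1 a b : R) (n : nat)
  (Hp0 : 0 < p0 < 1) (Hp1 : 0 < p1 < 1) (Hsum : p0 + p1 = 1) (Hneq : p0 <> p1)
  (Ha : 0 <= a) (Hab : a < b) (Hb : b <= 1) :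
  (* (a) *)
  (forall x : list bool, length x = n ->
     Fbar p0 p1 a b n x >= FIprev p0 p1 a b n x) /\
  (* (b): x not largest, y = x + 1 *)
  (forall x y : list bool, is_succG n x y ->
     Fbar p0 p1 a b n x >= floorl (FI p0 p1 a b n x) (lam p0 p1 a b y)) /\
  (* (c): w = x - 1, y = x + 1 *)
  (forall w x y : list bool, is_succG n w x -> is_succG n x y ->
     forall t : R,
       Rmin (Fbar p0 p1 a b n w) (FI p0 p1 a b n w) <= t <
       Rmin (Fbar p0 p1 a b n x) (FI p0 p1 a b n x) ->
       floorl (FI p0 p1 a b n w) (lam p0 p1 a b x) <= t < Fbar p0 p1 a b n x).
Proof.
  assert (Hrho : 1 <= rho p0 p1).
  { unfold rho. destruct (Rle_dec p1 p0).
    - pose proof (Rmax_l (p0/p1) (p1/p0)).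
      assert (1 <= p0/p1). { apply Rmult_le_reg_r with p1; [lra|].
        unfold Rdiv; rewrite Rmult_assoc, Rinv_l; lra. } lra.
    - pose proof (Rmax_r (p0/p1) (p1/p0)).
      assert (1 <= p1/p0). { apply Rmult_le_reg_r with p0; [lra|].
        unfold Rdiv; rewrite Rmult_assoc, Rinv_l; lra. } lra. }
  assert (Hpw : forall x, 0 < pw p0 p1 x) by (intro; apply pw_pos; lra).
  assert (Hlam : forall x, rho p0 p1 * (b - a) * pw p0 p1 x <= powerRZ 2 (- lam p0 p1 a b x)).
  { intro x. unfold lam. apply lam_bound. specialize (Hpw x).
    apply Rmult_lt_0_compat; auto. apply Rmult_lt_0_compat; lra. }
  assert (HA : forall x, FIprev p0 p1 a b n x < Fbar p0 p1 a b n x).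
  { intro x. unfold Fbar. pose proof (floorl_gt (FIprev p0 p1 a b n x + powerRZ 2 (- lam p0 p1 a b x)) (lam p0 p1 a b x)). lra. }
  assert (HB : forall x y : list bool, is_succG n x y ->
     Fbar p0 p1 a b n x >= floorl (FI p0 p1 a b n x) (lam p0 p1 a b y)).
  { intros x y Hs. apply Rle_ge.
    pose proof (succ_ratio p0 p1 n x y ltac:(lra) ltac:(lra) Hs) as Hr.
    pose proof (Hlam x) as Lx. pose proof (Hlam y) as Ly. pose proof (HA x) as Ax.
    pose proof (Fcdf_le p0 p1 n x (Rlt_le _ _ (Hpw x))) as Hc.
    assert (HF : FI p0 p1 a b n x <= FIprev p0 p1 a b n x + (b - a) * pw p0 p1 x).
    { unfold FI, FIprev. apply Rmult_le_compat_l with (r := b - a) in Hc; lra. }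
    pose proof (floorl_le (FI p0 p1 a b n x) (lam p0 p1 a b y)) as Hm.
    pose proof (Hpw x). pose proof (Hpw y).
    assert (0 < b - a) by lra.
    assert ((b - a) * pw p0 p1 x <= rho p0 p1 * (b - a) * pw p0 p1 x).
    { rewrite Rmult_assoc. pose proof (Rmult_lt_0_compat _ _ H1 H). nra. }
    assert ((b - a) * pw p0 p1 x <= rho p0 p1 * (b - a) * pw p0 p1 y).
    { replace (rho p0 p1 * (b - a) * pw p0 p1 y) with ((b - a) * (rho p0 p1 * pw p0 p1 y)) by ring.
      apply Rmult_le_compat_l; lra. }
    eapply combine with (F := FI p0 p1 a b n x); [reflexivity|reflexivity|exact Hm| |]; fold (Fbar p0 p1 a b n x); lra. }
  split; [|split].
  - intros x _. pose proof (HA x). lra.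
  - exact HB.
  - intros w x y H1 H2 t [t1 t2]. split.
    + pose proof (HB w x H1). pose proof (floorl_le (FI p0 p1 a b n w) (lam p0 p1 a b x)).
      eapply Rle_trans; [|exact t1]. apply Rmin_glb; lra.
    + pose proof (Rmin_l (Fbar p0 p1 a b n x) (FI p0 p1 a b n x)). lra.
Qed.
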